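(* Let $p$ and $q$ be odd primes and let $h \geq 1$ be an odd integer. Suppose $r, s$ are rational numbers with $2r, 2s \in \mathbb{Z}$, $2r \not\equiv 0 \pmod q$, $2s \not\equiv 0 \pmod q$, and $r^2 - p s^2 = q^h$. Define the rational number $S$ by $(r + s\sqrt{p})^h - (r - s\sqrt{p})^h = 2 S \sqrt{p}$. Then $\left(\frac{S}{q}\right) = \left(\frac{s}{q}\right)$.
   Context: $\left(\frac{\cdot}{q}\right)$ is the Legendre symbol modulo $q$; for a rational number whose denominator is a power of $2$ (such as $s$ and $S$), it is evaluated on its reduction modulo $q$ (using that $2$ is invertible modulo $q$). *)

(* Defs.v *)
From mathcomp Require Import all_boot all_order all_algebra.
Set Implicit Arguments. Unset Strict Implicit. Unset Printing Implicit Defensive.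
Import Order.TTheory GRing.Theory Num.Theory.
Local Open Scope ring_scope.

Definition legendre (q : nat) (a : int) : int :=
  if (q%:Z %| a)%Z then 0
  else if [exists x : 'I_q, (q%:Z %| (x%:Z) ^+ 2 - a)%Z] then 1 else -1.

(* Reduction modulo q of a rational x whose denominator is invertible mod q:
   numq x times an integer inverse of denq x modulo q (Bezout coefficient). *)
Definition rat_modq (q : nat) (x : rat) : int :=
  numq x * (egcdz (denq x) q%:Z).1.

Definition legendre_rat (q : nat) (x : rat) : int := legendre q (rat_modq q x).

(* Main.v *)
Require Import Defs.
From mathcomp Require Import all_boot all_order all_algebra.
From mathcomp Require Import ring zify.
Set Implicit Arguments. Unset Strict Implicit. Unset Printing Implicit Defensive.
Import Order.TTheory GRing.Theory Num.Theory.
Local Open Scope ring_scope.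

Section Fq.
Variable q : nat.
Hypothesis q_pr : prime q.
Local Notation F := ('F_q).
Local Notation phi z := (z%:~R : F).

Lemma phiN0 (n : nat) : ((n%:R : F) == 0) = (q %| n)%N.
Proof.
apply/eqP/idP.
  move=> H; have := congr1 (fun x : F => nat_of_ord x) H; rewrite /= val_Fp_nat //= => H2.
  by apply/dvdnP; exists (n %/ q)%N; rewrite {1}(divn_eq n q) H2 addn0.
move=> H; apply: val_inj; rewrite [LHS]val_Fp_nat //=; exact/eqP.
Qed.

Lemma phi0 (z : int) : (phi z == 0) = (q%:Z %| z)%Z.
Proof.
rewrite [z in LHS]intEsign rmorphM /= rmorph_sign mulf_eq0 signr_eq0 /=.
by rewrite dvdzE /= -phiN0.
Qed.

Lemma phiE (x y : int) : (phi x == phi y) = (q%:Z %| x - y)%Z.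
Proof. by rewrite -phi0 rmorphB subr_eq0. Qed.

Definition legF (v : F) : int :=
  if v == 0 then 0 else if [exists y : F, y ^+ 2 == v] then 1 else -1.

Lemma legendreE (a : int) : legendre q a = legF (phi a).
Proof.
rewrite /legendre /legF phi0; case: ifP => // _.
congr (if _ then _ else _); apply/existsP/existsP => -[x Hx].
  exists (phi x); move: Hx; rewrite -phiE => /eqP <-.
  by rewrite rmorphXn.
have xq : (val x < q)%N by rewrite -[X in (_ < X)%N](Fp_cast q_pr) ltn_ord.
exists (Ordinal xq); rewrite -phiE rmorphXn /=.
by rewrite -(eqP Hx) -[x in _ == x ^+ 2]natr_Zp.
Qed.

Lemma legF_sq (c v : F) : c != 0 -> legF (c ^+ 2 * v) = legF v.
Proof.
move=> c0; rewrite /legF mulf_eq0 expf_eq0 (negbTE c0) andbF /=.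
case: ifP => // _; congr (if _ then _ else _).
apply/existsP/existsP => -[y /eqP Hy].
  exists (y / c); apply/eqP; rewrite expr_div_n Hy mulrC mulrA mulVf ?mul1r //.
  by rewrite expf_eq0.
by exists (c * y); rewrite exprMn Hy.
Qed.

Lemma rat_modqP (x : rat) (d n : int) :
  x * d%:~R = n%:~R -> ~~ (q%:Z %| d)%Z ->
  phi (rat_modq q x) * phi d = phi n.
Proof.
move=> Hx qd.
have E : numq x * d = n * denq x.
  apply/eqP; rewrite -(eqr_int rat) !rmorphM /= numqE.
  by rewrite -Hx; apply/eqP; ring.
have Hden : phi (denq x) != 0.
  apply/negP => /eqP H0.
  have : phi (numq x) * phi d = 0 by rewrite -rmorphM E rmorphM /= H0 mulr0.
  move/eqP; rewrite mulf_eq0 (phi0 d) (negbTE qd) orbF phi0 => qn.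
  move: H0 => /eqP; rewrite phi0 => qden.
  have := coprime_num_den x; rewrite /coprime => /eqP g1.
  have : (q %| gcdn `|numq x| `|denq x|)%N by rewrite dvdn_gcd; apply/andP; split.
  by rewrite g1 dvdn1 => /eqP q1; move: q_pr; rewrite q1.
rewrite /rat_modq; case: egcdzP => u v Huv _ /=.
have Hu : phi u * phi (denq x) = 1.
  have : phi (u * denq x + v * q%:Z) = phi (gcdz (denq x) q%:Z) by rewrite Huv.
  rewrite rmorphD !rmorphM /= .
  have -> : phi q%:Z = 0 by apply/eqP; rewrite phi0 dvdzz.
  rewrite mulr0 addr0 => ->.
  rewrite /gcdz /= gcdnC.
  have : coprime q `|denq x| by rewrite prime_coprime //; move: Hden; rewrite phi0 dvdzE.
  by rewrite /coprime => /eqP ->.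
apply: (mulIf Hden); rewrite -!rmorphM /= -E !rmorphM /=.
transitivity (phi (numq x) * phi d * (phi u * phi (denq x))); first by ring. 
by rewrite Hu mulr1.
Qed.

End Fq.

Fixpoint seqab (a b P : int) (n : nat) : int * int :=
  match n with
  | 0 => (1, 0)
  | n'.+1 => let xy := seqab a b P n' in
             (a * xy.1 + P * b * xy.2, b * xy.1 + a * xy.2)
  end.

Lemma seqab1 a b P n : (seqab a b P n.+1).1 =
  a * (seqab a b P n).1 + P * b * (seqab a b P n).2.
Proof. by []. Qed.
Lemma seqab2 a b P n : (seqab a b P n.+1).2 =
  b * (seqab a b P n).1 + a * (seqab a b P n).2.
Proof. by []. Qed.
Lemma seqab01 a b P : (seqab a b P 0).1 = 1. Proof. by []. Qed.
Lemma seqab02 a b P : (seqab a b P 0).2 = 0. Proof. by []. Qed.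

Lemma seqab_pow (R : comNzRingType) (a b P : int) (t : R) n :
  t ^+ 2 = P%:~R ->
  (a%:~R + b%:~R * t) ^+ n = (seqab a b P n).1%:~R + (seqab a b P n).2%:~R * t /\
  (a%:~R - b%:~R * t) ^+ n = (seqab a b P n).1%:~R - (seqab a b P n).2%:~R * t.
Proof.
move=> Ht; elim: n => [|n [IH1 IH2]]; first by rewrite seqab01 seqab02 !expr0 mul0r addr0 subr0.
rewrite !exprS IH1 IH2 seqab1 seqab2 !rmorphD !rmorphM /= -Ht; split; ring.
Qed.

Lemma seqab_mod (F : comNzRingType) (a b P : int) (A B PP : F)
  (phi : {rmorphism int -> F}) :
  phi a = A -> phi b = B -> phi P = PP -> A ^+ 2 = PP * B ^+ 2 -> forall n,
  phi (seqab a b P n.+1).1 = (2 * A) ^+ n * A /\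
  phi (seqab a b P n.+1).2 = (2 * A) ^+ n * B.
Proof.
move=> Ha Hb HP HA; elim => [|n [IH1 IH2]].
  by rewrite seqab1 seqab2 seqab01 seqab02 !rmorphD !rmorphM /= Ha Hb HP rmorph1 rmorph0 expr0; split; ring.
rewrite seqab1 (seqab2 a) !rmorphD !rmorphM /= IH1 IH2 Ha Hb HP; split.
  transitivity ((2 * A) ^+ n * (A ^+ 2 + PP * B ^+ 2)); first by ring.
  by rewrite -HA [(2 * A) ^+ n.+1]exprS; ring.
by rewrite [(2 * A) ^+ n.+1]exprS; ring.
Qed.

Theorem lemma5 (R : rcfType) (p q h : nat) (r s S : rat) (a b : int) :
  prime p -> odd p -> prime q -> odd q -> odd h -> (1 <= h)%N ->
  2 * r = a%:~R -> 2 * s = b%:~R ->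
  ~~ (q%:Z %| a)%Z -> ~~ (q%:Z %| b)%Z ->
  r ^+ 2 - p%:R * s ^+ 2 = q%:R ^+ h ->
  (ratr r + ratr s * Num.sqrt (p%:R : R)) ^+ h
    - (ratr r - ratr s * Num.sqrt (p%:R : R)) ^+ h
    = 2 * ratr S * Num.sqrt (p%:R : R) ->
  legendre_rat q S = legendre_rat q s.
Proof.
move=> pp po qp qo ho h1 Hr Hs qa qb Heq HS.
set t := Num.sqrt (p%:R : R).
have t2 : t ^+ 2 = (p%:Z)%:~R by rewrite sqr_sqrtr ?ler0n.
have t0 : t != 0 by rewrite sqrtr_eq0 -ltNge ltr0n prime_gt0.
have [H1 H2] := seqab_pow a b h t2.
set y := (seqab a b p%:Z h).2 in H1 H2.
have Hr' : ratr r * 2 = (a%:~R : R) by rewrite -ratr_int -Hr rmorphM /= rmorph_nat mulrC.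
have Hs' : ratr s * 2 = (b%:~R : R) by rewrite -ratr_int -Hs rmorphM /= rmorph_nat mulrC.
have Hy : (y%:~R : R) = 2 ^+ h * ratr S.
  apply: (mulIf t0); apply: (mulfI (x := 2)); first by rewrite pnatr_eq0.
  transitivity ((a%:~R + b%:~R * t) ^+ h - (a%:~R - b%:~R * t) ^+ h : R).
    by rewrite H1 H2; ring.
  have -> : (a%:~R + b%:~R * t : R) = (ratr r + ratr s * t) * 2 by rewrite -Hr' -Hs'; ring.
  have -> : (a%:~R - b%:~R * t : R) = (ratr r - ratr s * t) * 2 by rewrite -Hr' -Hs'; ring.
  by rewrite !exprMn -mulrBl HS -/t; ring.
have HyQ : S * (2%:Z ^+ h)%:~R = y%:~R.
  apply: (@fmorph_inj _ R (@ratr R)); rewrite rmorphM /= !rmorph_int Hy rmorphXn /= mulrC. reflexivity.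
pose F := 'F_q.
have q2 : ~~ (q%:Z %| 2)%Z.
  apply/negP; rewrite dvdzE /= => /(dvdn_leq (isT : (0 < 2)%N)) q2.
  have q1 := prime_gt1 qp.
  have qe : q = 2%N by lia.
  by move: qo; rewrite qe.
have q2h : ~~ (q%:Z %| 2%:Z ^+ h)%Z.
  by rewrite -phi0 // rmorphXn /= expf_eq0 phi0 // (negbTE q2) andbF.
have Hm := @rat_modqP q qp s 2 b ltac:(by rewrite mulrC) q2.
have HM := @rat_modqP q qp S _ _ HyQ q2h.
have Ei : a ^+ 2 - p%:Z * b ^+ 2 = 4 * q%:Z ^+ h.
  apply/eqP; rewrite -(eqr_int rat); apply/eqP.
  rewrite !rmorphB !rmorphM !rmorphXn /= -Hr -Hs -!pmulrn.
  transitivity (4 * (r ^+ 2 - p%:R * s ^+ 2)); first by ring.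
  by rewrite Heq.
have HA : (a%:~R : F) ^+ 2 = (p%:Z)%:~R * (b%:~R) ^+ 2.
  apply/eqP; rewrite -subr_eq0 -!rmorphXn -rmorphM -rmorphB /= Ei rmorphM rmorphXn /=.
  have -> : ((q%:Z)%:~R : F) = 0 by apply/eqP; rewrite phi0 // dvdzz.
  by rewrite expr0n /= eqn0Ngt h1 mulr0.
have [_ Hy2] := @seqab_mod F a b p%:Z _ _ _ (intmul (1 : F)) erefl erefl erefl HA h.-1.
set h' := h.-1 in Hy2.
have eh : h = h'.+1 by rewrite prednK.
rewrite -eh in Hy2.
move: HM ho; rewrite eh => HM ho.
rewrite /legendre_rat !legendreE //.
have A0 : (a%:~R : F) != 0 by rewrite phi0.
have t20 : (2 : F) != 0 by rewrite -[2 : F]/((2%:Z)%:~R) phi0.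
have E : (rat_modq q S)%:~R = (a%:~R : F) ^+ h' * (rat_modq q s)%:~R :> F.
  apply: (mulIf (x := (2 : F) ^+ h'.+1)); first by rewrite expf_neq0.
  have Hy2' : (y%:~R : F) = (2 * a%:~R) ^+ h' * b%:~R by exact: Hy2.
  move: HM; rewrite rmorphXn /= Hy2' => ->.
  have Hm2 : (b%:~R : F) = (rat_modq q s)%:~R * 2 by rewrite -Hm.
  rewrite Hm2 [2 ^+ h'.+1]exprS exprMn; ring.
have [k hk] : exists k, h' = (k * 2)%N.
  by exists h'./2; move: ho => /= ho; rewrite -[h' in LHS]odd_double_half (negbTE ho) add0n -muln2.
rewrite E hk exprM legF_sq //.
by rewrite expf_eq0 (negbTE A0) andbF.
Qed.
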